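(* For $w\in S_n$, $$(\bar\chi^w)^\star=\sum_{z}(-1)^{|\iota(z)|-|\iota(y)|}\,\bar\chi^z,$$ where the sum is over those $z\in S_n$ for which the set $\{x\in C_z^\vee:\kappa(x)\ge\kappa(w^{-1})\}$ consists of exactly one element, and $y$ denotes that element.
   Context: Let $q$ be a prime power and $\mathfrak{ut}_n$ the additive group of strictly upper triangular $n\times n$ matrices over $\mathbb{F}_q$. For $w\in S_n$ (one-line notation): inversion table $\iota_k(w)=\#\{i<w^{-1}(k):w(i)>k\}$, $|\iota(w)|=\sum_k\iota_k(w)$; code $\kappa_k(w)=\#\{i<w(k):w^{-1}(i)>k\}$. Vectors are compared componentwise. $\mathfrak{ut}_w=\{x\in\mathfrak{ut}_n:x_{ij}\ne0\Rightarrow0<j-i\le\iota_i(w)\}$; $\mathfrak{ut}_v\subseteq\mathfrak{ut}_w$ iff $\iota(v)\le\iota(w)$ (inversion table order), and these subgroups form a lattice. The normal lattice supercharacter theory has supercharacters $\chi^w=\sum_\psi\psi(1)\psi$, over irreducible characters $\psi$ of $\mathfrak{ut}_n$ with $\mathfrak{ut}_w$ the largest lattice member contained in $\ker\psi$; $\mathrm{scf}(\mathfrak{ut}_n)$ is their span. The permutation character $\bar\chi^w$ is the character of $\mathrm{Ind}_{\mathfrak{ut}_w}^{\mathfrak{ut}_n}(\mathbf{1})$ (equivalently $\bar\chi^w=\sum_{v:\mathfrak{ut}_v\supseteq\mathfrak{ut}_w}\chi^v$). The involution $\star$ on $\mathrm{scf}(\mathfrak{ut}_n)$ is the linear map $\chi^w\mapsto\chi^{w^{-1}}$.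 For $z\in S_n$, $C_z^\vee$ is the Boolean sublattice of the inversion table order generated by the elements covered by $z$, namely the set of $x\in S_n$ with $\iota_k(z)-1\le\iota_k(x)\le\iota_k(z)$ for all $k$. *)

(* Defs.v *)
From HB Require Import structures.
From mathcomp Require Import all_boot all_order all_algebra all_fingroup all_field.
Set Implicit Arguments. Unset Strict Implicit. Unset Printing Implicit Defensive.
Import GRing.Theory Num.Theory.
Local Open Scope ring_scope.

(* Permutations of {1..n} are modelled as 'S_n = {perm 'I_n} (0-based values;
   all definitions only use order comparisons, so the shift is harmless). *)

Definition inv_table (n : nat) (w : 'S_n) (k : 'I_n) : nat :=
  #|[set i : 'I_n | (i < (w^-1)%g k)%N && (k < w i)%N]|.

Definition inv_size (n : nat) (w : 'S_n) : nat := (\sum_(k < n) inv_table w k)%N.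

Definition code (n : nat) (w : 'S_n) (k : 'I_n) : nat :=
  #|[set i : 'I_n | (i < w k)%N && (k < (w^-1)%g i)%N]|.

Definition ut_w (F : finFieldType) (n : nat) (w : 'S_n) : {set 'M[F]_n} :=
  [set x : 'M[F]_n | [forall i : 'I_n, forall j : 'I_n,
      (x i j != 0) ==> ((i < j)%N && (j - i <= inv_table w i)%N)]].

(* scf(ut_n): the span of the supercharacters chi^w, w in S_n, which form a
   basis; an element is represented by its coordinate vector in this basis. *)
Notation scf n := {ffun 'S_n -> algC^o}.

Definition supchar (n : nat) (w : 'S_n) : scf n := [ffun v => (v == w)%:R].

Definition perm_char (F : finFieldType) (n : nat) (w : 'S_n) : scf n :=
  \sum_(v : 'S_n | ut_w F w \subset ut_w F v) supchar v.

Definition star (n : nat) (f : scf n) : scf n :=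
  \sum_(w : 'S_n) f w *: supchar (w^-1)%g.

Definition Cvee (n : nat) (z : 'S_n) : {set 'S_n} :=
  [set x : 'S_n | [forall k : 'I_n,
     (inv_table z k <= (inv_table x k).+1)%N && (inv_table x k <= inv_table z k)%N]].

Definition Sset (n : nat) (w z : 'S_n) : {set 'S_n} :=
  [set x in Cvee z | [forall k : 'I_n, (code (w^-1)%g k <= code x k)%N]].

Definition the_y (n : nat) (w z : 'S_n) : 'S_n := odflt z [pick x in Sset w z].

(* Main.v *)
Require Import Defs.
From HB Require Import structures.
From mathcomp Require Import all_boot all_order all_algebra all_fingroup all_field.
From mathcomp Require Import zify.
Import GRing.Theory Num.Theory.
Local Open Scope ring_scope.
Set Implicit Arguments. Unset Strict Implicit. Unset Printing Implicit Defensive.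

Lemma ltn_lift n (h : 'I_n) (i j : 'I_n.-1) : (lift h i < lift h j)%N = (i < j)%N.
Proof. rewrite /= /bump; case: (leqP h i); case: (leqP h j) => /= *; lia. Qed.

Lemma lift_ltn n (h : 'I_n) (i : 'I_n.-1) : (lift h i < h)%N = (i < h)%N.
Proof. rewrite /= /bump; case: (leqP h i) => /= *; lia. Qed.

Lemma card_setE (T : finType) (P : pred T) : #|[set x | P x]| = (\sum_x (P x : nat))%N.
Proof. rewrite -sum1_card big_mkcond /=; apply: eq_bigr => i _; rewrite inE; by case: (P i). Qed.

Lemma sum_lt n m : (\sum_(i < n) ((i < m)%N : nat))%N = minn m n.
Proof.
elim: n => [|n IH]; first by rewrite big_ord0 minn0.
rewrite big_ord_recr /= IH; case: (ltnP n m) => H /=; lia.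
Qed.

Definition dec n (ps : 'I_n.+1 * 'S_n) : 'S_n.+1 := lift_perm ps.1 ord0 ps.2.

Lemma decV0 n p (s : 'S_n) : (lift_perm p ord0 s)^-1%g ord0 = p.
Proof. by rewrite lift_permV lift_perm_id. Qed.

Lemma decV_lift n p (s : 'S_n) k : (lift_perm p ord0 s)^-1%g (lift ord0 k) = lift p (s^-1%g k).
Proof. by rewrite lift_permV lift_perm_lift. Qed.

Lemma dec_inj n : injective (@dec n).
Proof.
move=> [p s] [q t]; rewrite /dec /= => E.
have Hp : p = q by rewrite -(decV0 p s) -(decV0 q t) E.
subst q; congr pair; apply/permP => k; apply: (@lift_inj _ ord0).
by rewrite -(lift_perm_lift p ord0 s) E lift_perm_lift.
Qed.

Lemma dec_bij n : bijective (@dec n).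
Proof. apply: (inj_card_bij (@dec_inj n)); by rewrite card_prod !card_Sn card_ord factS. Qed.

Lemma big_dec n (R : Type) (idx : R) (op : Monoid.com_law idx) (F : 'S_n.+1 -> R) :
  \big[op/idx]_x F x = \big[op/idx]_(p : 'I_n.+1) \big[op/idx]_(s : 'S_n) F (lift_perm p ord0 s).
Proof.
rewrite (reindex (@dec n)) /=; last exact: onW_bij (dec_bij n).
by rewrite pair_big /=; apply: eq_bigr => -[p s].
Qed.

Lemma decP n (x : 'S_n.+1) : exists p s, x = lift_perm p ord0 s.
Proof.
have [g _ K] := dec_bij n; exists (g x).1, (g x).2.
by rewrite -[x in LHS]K.
Qed.

Lemma inv_table_sum n (w : 'S_n) k :
  inv_table w k = (\sum_(i : 'I_n) ((i < w^-1%g k) && (k < w i) : nat))%N.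
Proof. by rewrite /inv_table card_setE. Qed.

Lemma code_sum n (w : 'S_n) k :
  code w k = (\sum_(i : 'I_n) ((i < w k) && (k < w^-1%g i) : nat))%N.
Proof. by rewrite /code card_setE. Qed.

Lemma iota_dec0 n p (s : 'S_n) : inv_table (lift_perm p ord0 s) ord0 = p.
Proof.
rewrite inv_table_sum decV0 (bigD1_ord p) //= ltnn /= add0n.
under eq_bigr => i _ do rewrite lift_perm_lift lift0 andbT lift_ltn.
rewrite sum_lt; have := ltn_ord p; lia.
Qed.

Lemma iota_dec_lift n p (s : 'S_n) k :
  inv_table (lift_perm p ord0 s) (lift ord0 k) = inv_table s k.
Proof.
rewrite !inv_table_sum decV_lift (bigD1_ord p) //= lift_perm_id ltn0 andbF add0n.
by apply: eq_bigr => i _; rewrite lift_perm_lift !ltn_lift.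
Qed.

Lemma code_dec_p n p (s : 'S_n) : code (lift_perm p ord0 s) p = 0%N.
Proof. by rewrite code_sum lift_perm_id big1 // => i _; rewrite ltn0. Qed.

Lemma code_dec_lift n p (s : 'S_n) j :
  code (lift_perm p ord0 s) (lift p j) = (code s j + (j < p))%N.
Proof.
rewrite !code_sum lift_perm_lift big_ord_recl /= decV0 lift_ltn addnC; congr addn.
by apply: eq_bigr => i _; rewrite decV_lift !ltn_lift.
Qed.

Lemma inv_size_dec n p (s : 'S_n) : inv_size (lift_perm p ord0 s) = (p + inv_size s)%N.
Proof.
rewrite /inv_size big_ord_recl iota_dec0; congr addn.
by apply: eq_bigr => k _; rewrite iota_dec_lift.
Qed.

Lemma iota_bound n (a : 'S_n) (k : 'I_n) : (k + inv_table a k < n)%N.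
Proof.
elim: n a k => [|n IH] a k; first by case: k.
have [p [s ->]] := decP a.
case: (unliftP ord0 k) => [k'|] ->.
  by rewrite iota_dec_lift lift0 addSn ltnS IH.
by rewrite iota_dec0 add0n.
Qed.

Lemma ut_sub (F : finFieldType) n (a b : 'S_n) :
  (ut_w F a \subset ut_w F b) = [forall k, (inv_table a k <= inv_table b k)%N].
Proof.
apply/subsetP/forallP.
- move=> H k; rewrite leqNgt; apply/negP => Hlt.
  have Hj : (k + inv_table a k < n)%N := iota_bound a k.
  pose j := Ordinal Hj.
  have : delta_mx k j \in ut_w F a.
    rewrite inE; apply/forallP => i; apply/forallP => j'; rewrite mxE; apply/implyP.
    case: (i =P k) => [->|_]; case: (j' =P j) => [->|_] /=; rewrite ?eqxx // => _.
    apply/andP; split; rewrite /=; lia.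
  move/H; rewrite inE => /forallP/(_ k)/forallP/(_ j); rewrite mxE !eqxx /= oner_neq0 /=.
  move/andP => [_]; rewrite /=; lia.
- move=> H x; rewrite !inE => /forallP Hx; apply/forallP => i; apply/forallP => j.
  apply/implyP => nz; have := Hx i; move/forallP/(_ j)/implyP/(_ nz)/andP => [-> Hle] /=.
  exact: leq_trans Hle (H i).
Qed.

Lemma forall_split n (h : 'I_n.+1) (P : pred 'I_n.+1) :
  [forall k, P k] = P h && [forall k : 'I_n, P (lift h k)].
Proof.
apply/forallP/andP => [H | [H0 /forallP H1] k]; first by split; [|apply/forallP].
by case: (unliftP h k) => [k'|] ->.
Qed.

Lemma Le_dec n p r (t u : 'S_n) :
  [forall k, (inv_table (lift_perm p ord0 t) k <= inv_table (lift_perm r ord0 u) k)%N]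
  = (p <= r)%N && [forall k, (inv_table t k <= inv_table u k)%N].
Proof.
rewrite (forall_split ord0) !iota_dec0; congr andb.
by apply: eq_forallb => k; rewrite !iota_dec_lift.
Qed.

Lemma Cvee_dec n p q (t s : 'S_n) :
  (lift_perm q ord0 s \in Cvee (lift_perm p ord0 t)) =
  [&& (p <= q.+1)%N, (q <= p)%N & s \in Cvee t].
Proof.
rewrite !inE (forall_split ord0) !iota_dec0 -andbA; congr andb; congr andb.
by apply: eq_forallb => k; rewrite !iota_dec_lift.
Qed.

Definition S n (c : 'I_n -> nat) (z : 'S_n) : {set 'S_n} :=
  [set x in Cvee z | [forall k : 'I_n, (c k <= code x k)%N]].

Definition cq n (c : 'I_n.+1 -> nat) (q : 'I_n.+1) : 'I_n -> nat :=
  fun j => (c (lift q j) - (j < q))%N.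

Lemma S_dec n (c : 'I_n.+1 -> nat) p q (t s : 'S_n) :
  (lift_perm q ord0 s \in S c (lift_perm p ord0 t)) =
  [&& (p <= q.+1)%N, (q <= p)%N, c q == 0%N & s \in S (cq c q) t].
Proof.
rewrite /S [in LHS]inE Cvee_dec (forall_split q) code_dec_p leqn0 [in RHS]inE.
have -> : [forall k, (c (lift q k) <= code (lift_perm q ord0 s) (lift q k))%N]
   = [forall k, (cq c q k <= code s k)%N].
  by apply: eq_forallb => k; rewrite code_dec_lift /cq leq_subLR addnC.
by case: (p <= q.+1)%N; case: (q <= p)%N; case: (c q == 0%N); case: (s \in Cvee t).
Qed.

Lemma S_ext n (c1 c2 : 'I_n -> nat) z : c1 =1 c2 -> S c1 z = S c2 z.
Proof. by move=> E; apply/setP => x; rewrite !inE; congr andb; apply: eq_forallb => k; rewrite E. Qed.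

Definition sgn n (z x : 'S_n) : algC := (-1) ^+ (inv_size z - inv_size x)%N.

Lemma Cvee_size n (t s : 'S_n) : s \in Cvee t -> (inv_size s <= inv_size t)%N.
Proof.
rewrite inE => /forallP H; apply: leq_sum => k _; by case/andP: (H k).
Qed.

Lemma sgn_dec n (p q : 'I_n.+1) (t s : 'S_n) : (q <= p)%N -> s \in Cvee t ->
  sgn (lift_perm p ord0 t) (lift_perm q ord0 s) = (-1) ^+ (p - q)%N * sgn t s.
Proof.
move=> Hqp /Cvee_size Hs; rewrite /sgn !inv_size_dec -exprD; congr (_ ^+ _); lia.
Qed.

Lemma sum_near_lo (R : Type) (idx : R) (op : Monoid.com_law idx) m (p : 'I_m) (P : pred 'I_m) (g : 'I_m -> R) :
  \big[op/idx]_(q : 'I_m | [&& (p <= q.+1)%N, (q <= p)%N & P q]) g q =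
  op (if P p then g p else idx) (\big[op/idx]_(q : 'I_m | (q.+1 == p :> nat) && P q) g q).
Proof.
rewrite (bigID (pred1 p)) /=; congr (op _ _).
  case: (boolP (P p)) => Pp.
    apply: big_pred1 => q /=; case: (q =P p) => [->|_]; rewrite ?andbF //.
    by rewrite Pp leqnn leqnSn.
  apply: big_pred0 => q; case: (q =P p) => [->|_]; by rewrite ?(negbTE Pp) ?andbF.
apply: eq_bigl => q; case: (P q); rewrite ?andbF ?andbT //.
have -> : (q != p) = (nat_of_ord q != nat_of_ord p) by [].
apply/idP/idP => [/andP[/andP[H1 H2] /eqP H3]|/eqP H]; first (apply/eqP; lia).
apply/andP; split; [apply/andP; split|apply/eqP]; lia.
Qed.

Lemma sum_near_hi (R : Type) (idx : R) (op : Monoid.com_law idx) m (q : 'I_m) (P : pred 'I_m) (g : 'I_m -> R) :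
  \big[op/idx]_(p : 'I_m | [&& (q <= p)%N, (p <= q.+1)%N & P p]) g p =
  op (if P q then g q else idx) (\big[op/idx]_(p : 'I_m | (p == q.+1 :> nat) && P p) g p).
Proof.
rewrite (bigID (pred1 q)) /=; congr (op _ _).
  case: (boolP (P q)) => Pq.
    apply: big_pred1 => p /=; case: (p =P q) => [->|_]; rewrite ?andbF //.
    by rewrite Pq leqnn leqnSn.
  apply: big_pred0 => p; case: (p =P q) => [->|_]; by rewrite ?(negbTE Pq) ?andbF.
apply: eq_bigl => p; case: (P p); rewrite ?andbF ?andbT //.
have -> : (p != q) = (nat_of_ord p != nat_of_ord q) by [].
apply/idP/idP => [/andP[/andP[H1 H2] /eqP H3]|/eqP H]; first (apply/eqP; lia).
apply/andP; split; [apply/andP; split|apply/eqP]; lia.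
Qed.

Lemma sum_pred_val (R : Type) (idx : R) (op : Monoid.com_law idx) m k (P : pred 'I_m) (g : 'I_m -> R) (Hk : (k < m)%N) :
  \big[op/idx]_(q : 'I_m | (q == k :> nat) && P q) g q = if P (Ordinal Hk) then g (Ordinal Hk) else idx.
Proof.
case: (boolP (P (Ordinal Hk))) => Pk.
  apply: big_pred1 => q /=; case: (boolP (val q == k)) => /= H.
    have -> : q = Ordinal Hk by apply: val_inj; apply/eqP.
    by rewrite Pk eqxx.
  by apply/esym/negbTE; apply: contra H => /eqP ->.
apply: big_pred0 => q; case: (boolP (val q == k)) => //= H.
have -> : q = Ordinal Hk by apply: val_inj; apply/eqP.
exact: negbTE.
Qed.

Lemma G n (c : 'I_n -> nat) (z : 'S_n) :
  #|S c z| != 1%N -> \sum_(x in S c z) sgn z x = 0.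
Proof.
elim: n c z => [|n IH] c z.
  move=> H; have : (#|S c z| <= 1)%N by rewrite -[1%N]/(0`!) -(card_Sn 0) max_card.
  rewrite leq_eqVlt (negbTE H) ltnS leqn0 => /eqP/cards0_eq ->.
  by rewrite big_set0.
have [p [t ->]] := decP z.
set z' := lift_perm p ord0 t.
have Hcard : #|S c z'| = (\sum_(q : 'I_n.+1 | [&& (p <= q.+1)%N, (q <= p)%N & c q == 0%N]) #|S (cq c q) t|)%N.
  rewrite -sum1_card big_mkcond /= big_dec [RHS]big_mkcond; apply: eq_bigr => q _.
  under eq_bigr => s _ do rewrite S_dec.
  case: (p <= q.+1)%N; case: (q <= p)%N; case: (c q == 0%N) => /=; try by rewrite big1.
  by rewrite -sum1_card [RHS]big_mkcond.
have Hsum : \sum_(x in S c z') sgn z' x =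
   \sum_(q : 'I_n.+1 | [&& (p <= q.+1)%N, (q <= p)%N & c q == 0%N])
      (-1) ^+ (p - q)%N * \sum_(s in S (cq c q) t) sgn t s.
  transitivity (\sum_(x : 'S_n.+1) (if x \in S c (lift_perm p ord0 t) then sgn z' x else 0)).
    exact: big_mkcond.
  rewrite big_dec [RHS]big_mkcond; apply: eq_bigr => q _.
  under eq_bigr => s _ do rewrite S_dec.
  case: (boolP (q <= p)%N) => Hqp; last by rewrite /= andbF big1 // => s _; rewrite /= andbF.
  case: (p <= q.+1)%N; case: (c q == 0%N) => /=; try by rewrite big1.
  rewrite mulr_sumr [RHS]big_mkcond; apply: eq_bigr => s _.
  case: ifP => Hs; last by rewrite ?mulr0.
  rewrite sgn_dec //; by move: Hs; rewrite inE => /andP[].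
rewrite Hcard Hsum !sum_near_lo subnn expr0 mul1r.
have IHq := fun q => IH (cq c q) t.
have [Hp0 | [p' Hp']] : nat_of_ord p = 0%N \/ exists p', nat_of_ord p = p'.+1.
    by case: (nat_of_ord p) => [|p']; [left|right; exists p'].
  have E0 : forall (R : Type) (idx : R) (op : Monoid.com_law idx) (g : 'I_n.+1 -> R),
      \big[op/idx]_(q : 'I_n.+1 | (q.+1 == p :> nat) && (c q == 0%N)) g q = idx.
    by move=> R idx op g; apply: big_pred0 => q; rewrite Hp0.
  rewrite !E0 /=.
  rewrite addn0 addr0; case: (c p == 0%N) => // H; exact: IHq.
have Hk : (p' < n.+1)%N by have := ltn_ord p; lia.
have E1 : forall (R : Type) (idx : R) (op : Monoid.com_law idx) (g : 'I_n.+1 -> R), \big[op/idx]_(q : 'I_n.+1 | (q.+1 == p :> nat) && (c q == 0%N)) g q =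
     \big[op/idx]_(q : 'I_n.+1 | (q == p' :> nat) && (c q == 0%N)) g q.
  by move=> R idx op g; apply: eq_bigl => q; rewrite Hp' eqSS.
rewrite !E1 !(sum_pred_val _ _ _ Hk).
set q0 := Ordinal Hk.
have Hpq : (p - q0)%N = 1%N by rewrite /= Hp' subSnn.
rewrite Hpq expr1 mulN1r.
case: (boolP (c p == 0%N)) => Hcp; case: (boolP (c q0 == 0%N)) => Hcq /=.
- have ES : S (cq c p) t = S (cq c q0) t.
    apply: S_ext => j; rewrite /cq.
    case: (ltngtP j p') => Hj.
    + have -> : lift p j = lift q0 j by apply: val_inj; rewrite /= /bump; lia.
      rewrite /=; congr (_ - _)%N; lia.
    + have -> : lift p j = lift q0 j by apply: val_inj; rewrite /= /bump; lia.
      rewrite /=; congr (_ - _)%N; lia.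
    + have -> : lift p j = q0 by apply: val_inj; rewrite /= /bump; lia.
      have -> : lift q0 j = p by apply: val_inj; rewrite /= /bump; lia.
      rewrite (eqP Hcp) (eqP Hcq) /=; lia.
  by rewrite ES subrr.
- by rewrite addn0 addr0 => H; apply: IHq.
- rewrite add0n add0r => H; by rewrite (IHq _ H) oppr0.
- by rewrite addr0.
Qed.

Lemma S0 (a b : 'S_0) : a = b.
Proof. by apply/permP => -[]. Qed.

Lemma dec_eq n (q r : 'I_n.+1) (s u : 'S_n) :
  (lift_perm q ord0 s == lift_perm r ord0 u) = (q == r) && (s == u).
Proof. by have := inj_eq (@dec_inj n) (q, s) (r, u). Qed.

Lemma M n (x v : 'S_n) :
  \sum_(z | [forall k, (inv_table z k <= inv_table v k)%N] && (x \in Cvee z)) sgn z x = (x == v)%:R.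
Proof.
elim: n x v => [|n IH] x v.
  rewrite (big_pred1 x); first by rewrite /sgn subnn expr0 (S0 x v) eqxx.
  move=> z; rewrite /= (S0 z x) eqxx inE; apply/andP; split; apply/forallP => -[] //.
have [q [s ->]] := decP x; have [r [u ->]] := decP v.
rewrite big_mkcond /= big_dec.
have -> : \sum_(p : 'I_n.+1) \sum_(t : 'S_n)
    (if [forall k, (inv_table (lift_perm p ord0 t) k <= inv_table (lift_perm r ord0 u) k)%N]
        && (lift_perm q ord0 s \in Cvee (lift_perm p ord0 t))
     then sgn (lift_perm p ord0 t) (lift_perm q ord0 s) else 0) =
   \sum_(p : 'I_n.+1 | [&& (q <= p)%N, (p <= q.+1)%N & (p <= r)%N])
     (-1) ^+ (p - q)%N * \sum_(t | [forall k, (inv_table t k <= inv_table u k)%N] && (s \in Cvee t)) sgn t s.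
  rewrite [RHS]big_mkcond; apply: eq_bigr => p _.
  under eq_bigr => t _ do rewrite Le_dec Cvee_dec.
  case: (boolP (q <= p)%N) => Hqp; rewrite ?andbF /=; last by rewrite big1 // => t; rewrite !andbF.
  case: (p <= q.+1)%N; case: (p <= r)%N => /=; try by rewrite big1 // => t; rewrite ?andbF.
  rewrite mulr_sumr [RHS]big_mkcond; apply: eq_bigr => t _.
  case: ifP => Hs; last by rewrite ?mulr0.
  rewrite sgn_dec //; by case/andP: Hs.
rewrite -big_distrl /= IH sum_near_hi dec_eq.
case: (ltnP q r) => Hqr.
  have Hk : (q.+1 < n.+1)%N by have := ltn_ord r; lia.
  rewrite (sum_pred_val _ _ _ Hk) /= Hqr (ltnW Hqr) subSnn expr1 subnn expr0 addrN mul0r.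
  have -> : (q == r) = false by apply/negbTE; rewrite neq_ltn Hqr.
  by [].
rewrite big_pred0 => [|p]; last first.
  by case: (boolP (val p == q.+1)) => //= /eqP ->; rewrite ltnNge Hqr.
rewrite /= addr0 subnn expr0.
case: (boolP (q == r)) => [/eqP ->|Hne]; first by rewrite leqnn /= mul1r.
have Hne' : nat_of_ord q <> nat_of_ord r by move=> E; move/eqP: Hne; apply; apply: val_inj.
have -> : (q <= r)%N = false by apply/negbTE; rewrite -ltnNge; lia.
by rewrite /= mul0r.
Qed.

Lemma Gy n (c : 'I_n -> nat) (z : 'S_n) :
  \sum_(x in S c z) sgn z x =
  if #|S c z| == 1%N then sgn z (odflt z [pick x in S c z]) else 0.
Proof.
case: ifP => H; last by apply: G; rewrite H.
case/cards1P: H => y E; rewrite E big_set1.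
case: pickP => [x|]; first by rewrite inE => /eqP ->.
by move/(_ y); rewrite inE eqxx.
Qed.

Lemma starE n (f : scf n) (v : 'S_n) : star f v = f (v^-1)%g.
Proof.
rewrite /star sum_ffunE (bigD1 (v^-1)%g) //= !ffunE invgK eqxx mulr1n.
rewrite -[_ *: _]/(_ * _) mulr1.
rewrite big1 ?addr0 // => w Hw; rewrite !ffunE.
case: eqP => [E|]; last by rewrite mulr0n -[_ *: _]/(_ * _) mulr0.
by move: Hw; rewrite E invgK eqxx.
Qed.

Lemma perm_charE (F : finFieldType) n (w u : 'S_n) :
  perm_char F w u = (ut_w F w \subset ut_w F u)%:R.
Proof.
rewrite /perm_char sum_ffunE big_mkcond (bigD1 u) //= big1 ?addr0.
  by rewrite !ffunE eqxx; case: ifP.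
move=> v /negbTE nv; rewrite !ffunE eq_sym nv; by case: ifP.
Qed.

Unset Implicit Arguments.

Theorem theorem5p1 (F : finFieldType) (n : nat) (w : 'S_n) :
  star (perm_char F w) =
  \sum_(z : 'S_n | #|Sset w z| == 1%N)
     (-1) ^+ (inv_size z - inv_size (the_y w z))%N *: perm_char F z.
Proof.
apply/ffunP => v; rewrite starE perm_charE ut_sub sum_ffunE.
set c := code (w^-1)%g.
have -> : [forall k, (inv_table w k <= inv_table (v^-1)%g k)%N] = [forall k, (c k <= code v k)%N].
  by apply: eq_forallb => k; rewrite /c /code /inv_table !invgK.
transitivity (\sum_(z : 'S_n) (ut_w F z \subset ut_w F v)%:R * \sum_(x in S c z) sgn z x); last first.
  rewrite [RHS]big_mkcond; apply: eq_bigr => z _.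
  rewrite Gy !ffunE perm_charE.
  change (Sset w z) with (S c z); rewrite /the_y.
  change (Sset w z) with (S c z).
  case: ifP => _; last by rewrite mulr0.
  by rewrite mulrC.
under eq_bigr => z _ do rewrite mulr_sumr ut_sub.
transitivity (\sum_(z : 'S_n) \sum_(x : 'S_n)
   (if [forall k, (inv_table z k <= inv_table v k)%N] && (x \in Cvee z) && [forall k, (c k <= code x k)%N]
    then sgn z x else 0)); last first.
  apply: eq_bigr => z _; rewrite [RHS]big_mkcond; apply: eq_bigr => x _.
  rewrite /S !inE -andbA.
  case: (boolP [forall k, (inv_table z k <= inv_table v k)%N]) => _ /=; rewrite ?mul1r ?mul0r //.
  by case: ifP.
rewrite exchange_big /=.
transitivity (\sum_(x : 'S_n) (if [forall k, (c k <= code x k)%N] then (x == v)%:R else (0 : algC))); last first.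
  apply: eq_bigr => x _; case: ifP => Hc.
    rewrite -(M x v) big_mkcond; apply: eq_bigr => z _; by rewrite andbT.
  by rewrite big1 // => z _; rewrite andbF.
rewrite (bigD1 v) //= eqxx big1 ?addr0.
  by case: ifP.
by move=> x /negbTE ->; case: ifP.
Qed.
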